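(* Let $X=(X,d,\mathcal M,\mu)$ be a metric measure space and $1\le p<\infty$. Let $a\in X_0$ be such that for every $\lambda>0$, $B(a,\lambda)\in\mathcal M$ and $\mu(B(a,\lambda))>0$, and $\mu(B(a,\lambda'))<\infty$ for some $\lambda'>0$. Suppose that $A\subset L^p(X)$ and $\xi:A\to(0,\infty)$ is a function such that every $f\in A$ satisfies $f(x)=0$ for almost every $x\in B(a,\xi(f))$, and that $B$ is a $Z$-set in $L^p(X)$. If $A\cup B$ is closed in $L^p(X)$, then $A\cup B$ is a $Z$-set in $L^p(X)$.
   Context: A metric measure space $X=(X,d,\mathcal M,\mu)$ consists of a metric space $(X,d)$, a $\sigma$-algebra $\mathcal M$ and a measure $\mu$ on $\mathcal M$. $X_0=\{x\in X:\{x\}\in\mathcal M,\ \mu(\{x\})=0\}$, $B(a,\lambda)=\{x:d(a,x)<\lambda\}$. $L^p(X)$ is the Banach space of $\mathcal M$-measurable $f:X\to\mathbb R$ with $\|f\|_p=(\int_X|f|^pd\mu)^{1/p}<\infty$, modulo a.e. equality. For maps $f,g:Z\to M$ and an open cover $\mathcal U$ of $M$, $f$ is $\mathcal U$-close to $g$ if for each $z$ some $U\in\mathcal U$ contains $\{f(z),g(z)\}$. A closed set $A$ in a space $M$ is a $Z$-set if for every open cover $\mathcal U$ of $M$ there is a continuous $f:M\to M$ that is $\mathcal U$-close to the identity with $f(M)\cap A=\emptyset$. *)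

(* Defs.v *)
From HB Require Import structures.
From mathcomp Require Import all_boot all_order all_algebra.
From mathcomp Require Import all_classical all_reals all_analysis.
Set Implicit Arguments. Unset Strict Implicit. Unset Printing Implicit Defensive.
Import Order.TTheory GRing.Theory Num.Theory.
Import numFieldNormedType.Exports.
Local Open Scope classical_set_scope.
Local Open Scope ring_scope.

Definition is_metric (R : realType) (T : Type) (dist : T -> T -> R) : Prop :=
  (forall x y, 0 <= dist x y) /\
  (forall x y, dist x y = 0 <-> x = y) /\
  (forall x y, dist x y = dist y x) /\
  (forall x y z, dist x z <= dist x y + dist y z).

Definition mball (R : realType) (T : Type) (dist : T -> T -> R) (a : T) (lam : R)
  : set T := [set x | dist a x < lam].

Definition X0 d (T : measurableType d) (R : realType)
  (mu : {measure set T -> \bar R}) : set T :=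
  [set x | measurable [set x] /\ mu [set x] = 0%E].

Definition Lpdist d (T : measurableType d) (R : realType)
  (mu : {measure set T -> \bar R}) (p : R) (p1 : (1 <= p%:E)%E)
  (F G : LspaceType mu p1) : R :=
  fine ('N[mu]_(p%:E)[EFin \o (fun x => ((F : T -> R) x - (G : T -> R) x)%R)])%E.

Section MetricTopology.
Context (R : realType) (M : Type) (dist : M -> M -> R).

Definition mopen (U : set M) : Prop :=
  forall x, U x -> exists2 e : R, 0 < e & forall y, dist x y < e -> U y.

Definition mclosed (S : set M) : Prop := mopen (~` S).

Definition mcontinuous (f : M -> M) : Prop :=
  forall x (e : R), 0 < e -> exists2 del : R, 0 < del &
    forall y, dist x y < del -> dist (f x) (f y) < e.

Definition open_cover (UU : set (set M)) : Prop :=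
  (forall U, UU U -> mopen U) /\ (forall x, exists2 U, UU U & U x).

Definition cover_close (UU : set (set M)) (f g : M -> M) : Prop :=
  forall z, exists2 U, UU U & (U (f z) /\ U (g z)).

Definition Zset (A : set M) : Prop :=
  mclosed A /\
  forall UU, open_cover UU ->
    exists f : M -> M, [/\ mcontinuous f, cover_close UU f id &
                           f @` setT `&` A = set0].
End MetricTopology.

(* Main.v *)
Require Import Defs.
From HB Require Import structures.
From mathcomp Require Import all_boot all_order all_algebra.
From mathcomp Require Import all_classical all_reals all_analysis.
From mathcomp Require Import measurable_realfun lra ring.
Import Order.TTheory GRing.Theory Num.Theory.
Import numFieldNormedType.Exports.

Module P1.
Local Open Scope classical_set_scope.
Local Open Scope ring_scope.

Section NrFacts.
Context {d} {T : measurableType d} {R : realType} {mu : {measure set T -> \bar R}}.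
Context {p : R} (p1 : 1 <= p).

Definition Nr (f : T -> R) := ('N[mu]_p%:E[EFin \o f])%E.

Let p0 : 0 < p. Proof. exact: (lt_le_trans ltr01 p1). Qed.

Lemma mpow (f : T -> R) : measurable_fun setT f ->
  measurable_fun setT (fun x => ((`|f x| `^ p)%:E : \bar R)).
Proof.
move=> mf; apply/measurable_EFinP.
apply: (@measurableT_comp _ _ _ _ _ _ (@powR R ^~ p)); first exact: measurable_powR.
exact: measurableT_comp.
Qed.

Lemma NrE (f : T -> R) : Nr f = ((\int[mu]_x (`|f x| `^ p)%:E) `^ p^-1)%E.
Proof. by rewrite /Nr unlock /=. Qed.

Lemma Nr_ge0 (f : T -> R) : (0 <= Nr f)%E.
Proof. exact: Lnorm_ge0. Qed.

Lemma Nr_le (f g : T -> R) : measurable_fun setT f -> measurable_fun setT g ->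
  (forall x, `|f x| <= `|g x|) -> (Nr f <= Nr g)%E.
Proof.
move=> mf mg fg; rewrite !NrE.
apply: gt0_ler_poweR.
- by rewrite invr_ge0 ltW.
- by rewrite in_itv /= leey andbT integral_ge0 // => x _; rewrite lee_fin powR_ge0.
- by rewrite in_itv /= leey andbT integral_ge0 // => x _; rewrite lee_fin powR_ge0.
apply: ge0_le_integral => //.
- exact: mpow.
- exact: mpow.
move=> x _; rewrite lee_fin; apply: ge0_ler_powR; [exact: ltW|by rewrite nnegrE|by rewrite nnegrE|exact: fg].
Qed.

Lemma Nr_ae (f g : T -> R) : measurable_fun setT f -> measurable_fun setT g ->
  {ae mu, forall x, f x = g x} -> Nr f = Nr g.
Proof.
move=> mf mg fg; rewrite !NrE; congr (_ `^ _)%E.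
apply: ae_eq_integral => //; try exact: mpow.
by apply: filterS fg => x /= -> _.
Qed.

Lemma Nr_scale (k : R) (f : T -> R) : measurable_fun setT f ->
  Nr (fun x => k * f x) = (`|k|%:E * Nr f)%E.
Proof.
move=> mf; rewrite !NrE.
under eq_integral do rewrite normrM powRM // EFinM.
rewrite ge0_integralZl_EFin //; try (by move=> x _; rewrite lee_fin powR_ge0);
  try exact: mpow; try exact: powR_ge0.
rewrite poweRM //; last by rewrite integral_ge0 // => x _; rewrite lee_fin powR_ge0.
by rewrite poweR_EFin -powRrM mulfV ?gt_eqF // powRr1.
Qed.

Lemma Nr_indic (S : set T) : measurable S -> Nr (\1_S) = (mu S `^ p^-1)%E.
Proof.
move=> mS; rewrite NrE; congr (_ `^ _)%E.
transitivity (\int[mu]_x (\1_S x)%:E)%E; last by rewrite integral_indic // setIT.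
apply: eq_integral => x _; rewrite /indic; case: (x \in S) => /=.
- by rewrite normr1 powR1.
- by rewrite normr0 powR0 // gt_eqF.
Qed.

Lemma Nr_add (f g : T -> R) : measurable_fun setT f -> measurable_fun setT g ->
  (Nr (fun x => (f x + g x)%R) <= Nr f + Nr g)%E.
Proof. by move=> mf mg; exact: minkowski_EFin. Qed.

End NrFacts.
Arguments Nr {d T R} mu p f.

End P1.
Import P1.

Module P2.
Local Open Scope classical_set_scope.
Local Open Scope ring_scope.
Local Open Scope quotient_scope.

Section LpElts.
Context {d} {T : measurableType d} {R : realType} {mu : {measure set T -> \bar R}}.
Context {p : R} (p1 : (1 <= p%:E)%E).
Local Notation Lp := (LspaceType mu p1).

Lemma p1r : 1 <= p. Proof. by rewrite -lee_fin. Qed.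

Lemma mLp (F : Lp) : measurable_fun setT (F : T -> R).
Proof. exact: (measurable_funPT (repr (LebesgueSpace.sort F))). Qed.

Lemma Lp_fin (F : Lp) : (Nr mu p (F : T -> R) < +oo)%E.
Proof. exact: Lebesgue_finite. Qed.

Section Mk.
Context (f : T -> R) (mf : measurable_fun setT f) (ff : (Nr mu p f < +oo)%E).

Let mfm : f \in @mfun _ _ T (measurableTypeR R). Proof. by rewrite inE. Qed.
Let m : {mfun T >-> measurableTypeR R} := @mfun_Sub _ _ T (measurableTypeR R) f mfm.
Let q : {mfun_ mu, T >-> measurableTypeR R} := \pi m.

Let q_ae : {ae mu, forall x, (q : T -> R) x = f x}.
Proof.
have : ae_eq_op mu (repr q) m.
  by rewrite -eqmodE reprK.
move/asboolP.
by apply: filterS => x /(_ I).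
Qed.

Let q_fin : finite_norm mu p%:E (q : T -> R).
Proof.
have mq : measurable_fun setT (q : T -> R) by exact: (measurable_funPT (repr q)).
have := Nr_ae _ _ mq mf q_ae.
rewrite /finite_norm /Nr => ->; exact: ff.
Qed.

Definition mkLp : Lp :=
  @LebesgueSpace.Pack d T R mu p%:E p1 q
    (LebesgueSpace.Class (isFinLebesgue.Build d T R mu p%:E p1 q q_fin)).

Lemma mkLp_ae : {ae mu, forall x, (mkLp : T -> R) x = f x}.
Proof. exact: q_ae. Qed.
End Mk.

End LpElts.

End P2.
Import P2.

Module P3.
Set Implicit Arguments. Unset Strict Implicit.
Local Open Scope classical_set_scope.
Local Open Scope ring_scope.

Section NrReal.
Context {d} {T : measurableType d} {R : realType} {mu : {measure set T -> \bar R}}.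
Context {p : R} (p1 : 1 <= p).

Definition nr (f : T -> R) := fine (Nr mu p f).
Definition fin (f : T -> R) := measurable_fun setT f /\ (Nr mu p f < +oo)%E.

Lemma nrE f : fin f -> (nr f)%:E = Nr mu p f.
Proof.
move=> [_ ff]; rewrite /nr fineK //.
by rewrite ge0_fin_numE // Nr_ge0.
Qed.

Lemma nr_ge0 f : 0 <= nr f.
Proof. by rewrite /nr fine_ge0 // Nr_ge0. Qed.

Lemma fin_le (f g : T -> R) : measurable_fun setT f -> fin g ->
  (forall x, `|f x| <= `|g x|) -> fin f.
Proof.
move=> mf [mg fg] le; split => //.
exact: le_lt_trans (Nr_le p1 f g mf mg le) fg.
Qed.

Lemma nr_le (f g : T -> R) : measurable_fun setT f -> fin g ->
  (forall x, `|f x| <= `|g x|) -> nr f <= nr g.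
Proof.
move=> mf fg le; have ff := fin_le mf fg le.
rewrite -lee_fin !nrE //; case: fg => mg _.
exact: Nr_le.
Qed.

Lemma fin_add (f g : T -> R) : fin f -> fin g -> fin (fun x => f x + g x).
Proof.
move=> [mf ff] [mg fg]; split; first exact: measurable_funD.
apply: le_lt_trans (Nr_add p1 f g mf mg) _.
by rewrite lte_add_pinfty.
Qed.

Lemma nr_add (f g : T -> R) : fin f -> fin g ->
  nr (fun x => f x + g x) <= nr f + nr g.
Proof.
move=> ff fg; have := fin_add ff fg => ffg.
rewrite -lee_fin EFinD !nrE //.
case: ff => mf _; case: fg => mg _; exact: Nr_add.
Qed.

Lemma fin_scale (k : R) (f : T -> R) : fin f -> fin (fun x => k * f x).
Proof.
move=> [mf ff]; split; first exact: measurable_funM.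
by rewrite Nr_scale // lte_mul_pinfty.
Qed.

Lemma nr_scale (k : R) (f : T -> R) : fin f -> nr (fun x => k * f x) = `|k| * nr f.
Proof.
move=> ff; apply: EFin_inj; rewrite EFinM !nrE //; last exact: fin_scale.
by case: ff => mf _; rewrite Nr_scale.
Qed.

Lemma nr_ae (f g : T -> R) : measurable_fun setT f -> measurable_fun setT g ->
  {ae mu, forall x, f x = g x} -> nr f = nr g.
Proof. by move=> mf mg fg; rewrite /nr (Nr_ae _ _ mf mg fg). Qed.

Lemma nr_opp (f : T -> R) : fin f -> nr (fun x => - f x) = nr f.
Proof.
move=> ff; rewrite -(_ : (fun x => -1 * f x) = (fun x => - f x)).
  by rewrite nr_scale // normrN normr1 mul1r.
by apply: funext => x; rewrite mulN1r.
Qed.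

Lemma fin_sub (f g : T -> R) : fin f -> fin g -> fin (fun x => f x - g x).
Proof.
move=> ff fg; apply: fin_add => //.
have := fin_scale (-1) fg; congr fin; apply: funext => x; by rewrite mulN1r.
Qed.

Lemma nr_subC (f g : T -> R) : fin f -> fin g ->
  nr (fun x => f x - g x) = nr (fun x => g x - f x).
Proof.
move=> ff fg; rewrite -nr_opp; last exact: fin_sub.
by congr nr; apply: funext => x; rewrite opprB.
Qed.

Lemma nr_tri (f g h : T -> R) : fin f -> fin g -> fin h ->
  nr (fun x => f x - h x) <= nr (fun x => f x - g x) + nr (fun x => g x - h x).
Proof.
move=> ff fg fh.
have -> : (fun x => f x - h x) = (fun x => (f x - g x) + (g x - h x)).
  by apply: funext => x; rewrite addrA subrK.
by apply: nr_add; apply: fin_sub.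
Qed.

Lemma nr0 : nr (fun=> 0) = 0.
Proof.
rewrite /nr /Nr (_ : (EFin \o fun=> 0) = cst 0%E) ?Lnorm0 //.
by rewrite gt_eqF // lte_fin (lt_le_trans ltr01 p1).
Qed.

Lemma fin_indic (S : set T) : measurable S -> (mu S < +oo)%E -> fin (\1_S).
Proof.
move=> mS muS; split; first exact: measurable_indic.
by rewrite Nr_indic // poweR_lty.
Qed.

End NrReal.
Arguments nr {d T R} mu p f.
Arguments fin {d T R} mu p f.

Section LpDist.
Context {d} {T : measurableType d} {R : realType} {mu : {measure set T -> \bar R}}.
Context {p : R} (p1 : (1 <= p%:E)%E).
Local Notation Lp := (LspaceType mu p1).
Local Notation dd := (@Lpdist d T R mu p p1).

Let p1' : 1 <= p. Proof. exact: p1r p1. Qed.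

Lemma finLp (F : Lp) : fin mu p (F : T -> R).
Proof. split; [exact: mLp | exact: Lp_fin]. Qed.

Lemma ddE (F G : Lp) : dd F G = nr mu p (fun x => (F : T -> R) x - (G : T -> R) x).
Proof. by []. Qed.

Lemma dd_ge0 F G : 0 <= dd F G.
Proof. exact: nr_ge0. Qed.

Lemma dd_sym F G : dd F G = dd G F.
Proof. rewrite !ddE; apply: nr_subC => //; exact: finLp. Qed.

Lemma dd_tri F G H : dd F H <= dd F G + dd G H.
Proof. rewrite !ddE; apply: nr_tri => //; exact: finLp. Qed.

Lemma dd_refl F : dd F F = 0.
Proof.
rewrite ddE -(@nr0 _ _ _ mu _ p1'); congr nr; apply: funext => x; by rewrite subrr.
Qed.

End LpDist.

Section NrMore.
Context {d} {T : measurableType d} {R : realType} {mu : {measure set T -> \bar R}}.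
Context {p : R} (p1 : 1 <= p).

Lemma fin_opp (f : T -> R) : fin mu p f -> fin mu p (fun x => - f x).
Proof.
move=> ff; have := fin_scale p1 (-1) ff; congr fin; apply: funext => x; by rewrite mulN1r.
Qed.

Lemma nr_sub_le (f g : T -> R) : fin mu p f -> fin mu p g ->
  nr mu p (fun x => f x - g x) <= nr mu p f + nr mu p g.
Proof.
move=> ff fg; apply: le_trans (nr_add p1 ff (fin_opp fg)) _.
by rewrite (nr_opp p1 fg).
Qed.

Lemma fin_abs (f : T -> R) : fin mu p f -> fin mu p (fun x => `|f x|).
Proof.
move=> ff; apply: (fin_le p1 _ ff); last by move=> x; rewrite normr_id.
by case: ff => mf _; exact: measurableT_comp.
Qed.

Lemma nr_abs (f : T -> R) : fin mu p f -> nr mu p (fun x => `|f x|) = nr mu p f.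
Proof.
move=> ff; apply/eqP; rewrite eq_le; apply/andP; split.
- by apply: nr_le => //; [exact: (fin_abs ff).1 | move=> x; rewrite normr_id].
- by apply: nr_le => //; [exact: ff.1 | exact: fin_abs | move=> x; rewrite normr_id].
Qed.

End NrMore.

End P3.
Import P3.

Module P4.
Set Implicit Arguments. Unset Strict Implicit.
Local Open Scope classical_set_scope.
Local Open Scope ring_scope.

Section Rho.
Context {R : realType} {M : Type} (dist : M -> M -> R).
Hypothesis d_ge0 : forall x y, 0 <= dist x y.
Hypothesis d_sym : forall x y, dist x y = dist y x.
Hypothesis d_tri : forall x y z, dist x z <= dist x y + dist y z.
Hypothesis d_refl : forall x, dist x x = 0.

Definition Srho (UU : set (set M)) (z : M) : set R :=
  [set r | 0 <= r <= 1 /\ exists2 U, UU U & forall y, dist z y < r -> U y].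
Definition rho UU z := sup (Srho UU z).

Context (UU : set (set M)) (UUn0 : exists U, UU U).

Lemma Srho0 z : Srho UU z 0.
Proof.
case: UUn0 => U hU; split; first by rewrite lexx ler01.
by exists U => // y; rewrite ltNge d_ge0.
Qed.

Lemma has_sup_Srho z : has_sup (Srho UU z).
Proof.
split; first by exists 0; exact: Srho0.
by exists 1 => r [/andP[_ ->]].
Qed.

Lemma rho_ge0 z : 0 <= rho UU z.
Proof. exact: sup_upper_bound (has_sup_Srho z) _ (Srho0 z). Qed.

Lemma rho_le1 z : rho UU z <= 1.
Proof.
by apply: ge_sup; [exists 0; exact: Srho0 | move=> r [/andP[_ ->]]].
Qed.

Lemma rho_ball z r : r < rho UU z ->
  exists2 U, UU U & forall y, dist z y < r -> U y.
Proof.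
move=> rz.
have [e [_ [U UUU hU]] He] := sup_adherent (eps := rho UU z - r) (ltac:(by rewrite subr_gt0)) (has_sup_Srho z).
exists U => // y hy; apply: hU; apply: lt_trans hy _.
by move: He; rewrite opprB addrCA subrr addr0.
Qed.

Lemma rho_lip z z' : rho UU z - dist z z' <= rho UU z'.
Proof.
rewrite lerBlDr; apply: ge_sup; first by exists 0; exact: Srho0.
move=> r [/andP[r0 r1] [U UUU hU]].
have [le|lt] := leP r (dist z z').
  by apply: le_trans le _; rewrite lerDr rho_ge0.
rewrite -lerBlDr; apply: sup_upper_bound; first exact: has_sup_Srho.
split.
  by rewrite subr_ge0 (ltW lt) /= lerBlDr (le_trans r1) // lerDl d_ge0.
exists U => // y hy; apply: hU.
by apply: le_lt_trans (d_tri z z' y) _; rewrite -ltrBrDl.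
Qed.

Lemma rho_gt0 z U : UU U -> mopen dist U -> U z -> 0 < rho UU z.
Proof.
move=> UUU oU Uz; have [e e0 he] := oU z Uz.
apply: (@lt_le_trans _ _ (Num.min e 1)); first by rewrite lt_min e0 ltr01.
apply: sup_upper_bound; first exact: has_sup_Srho.
split; first by rewrite ge_min lexx orbT le_min (ltW e0) ler01.
exists U => // y hy; apply: he; apply: lt_le_trans hy _; by rewrite ge_min lexx.
Qed.

End Rho.

End P4.
Import P4.

Module P5.
Set Implicit Arguments. Unset Strict Implicit.
Local Open Scope classical_set_scope.
Local Open Scope ring_scope.

Section Shells.
Context {d} {X : measurableType d} {R : realType} (dist : X -> X -> R).
Context (hm : is_metric dist) (a : X) (lam : R) (lam0 : 0 < lam).
Context (mB : forall r, 0 < r -> measurable (mball dist a r)).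

Definition rad (n : nat) : R := lam / n.+1%:R.
Definition Bn n := mball dist a (rad n).

Lemma rad_gt0 n : 0 < rad n.
Proof. by rewrite /rad divr_gt0. Qed.

Lemma mBn n : measurable (Bn n).
Proof. exact: mB (rad_gt0 n). Qed.

Lemma rad_le m n : (m <= n)%N -> rad n <= rad m.
Proof.
by move=> mn; rewrite /rad ler_wpM2l ?(ltW lam0) // lef_pV2 ?posrE // ler_nat ltnS.
Qed.

Lemma Bn_sub m n : (m <= n)%N -> Bn n `<=` Bn m.
Proof. by move=> mn x; rewrite /Bn /mball /= => h; apply: lt_le_trans h (rad_le mn). Qed.

Lemma Bn_out x : x <> a -> exists k, ~ Bn k x.
Proof.
move=> xa; case: hm => d0 [dE [dS _]].
have dx : 0 < dist a x.
  rewrite lt_neqAle d0 andbT; apply/eqP => /esym /dE h; exact: xa (esym h).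
exists (Num.truncn (lam / dist a x)); rewrite /Bn /mball /=; apply/negP; rewrite -leNgt.
rewrite /rad ler_pdivrMr // mulrC -ler_pdivrMr //.
exact: ltW (truncnS_gt _).
Qed.

Definition Sx x := [set n : nat | (0 < n)%N /\ Bn n x /\ ~ Bn n.+1 x].
Definition nidx x := xget 0%N (Sx x).

Lemma nidx_spec x : (0 < nidx x)%N -> Bn (nidx x) x /\ ~ Bn (nidx x).+1 x.
Proof.
rewrite /nidx; case: xgetP => [n -> [_ h] | _] //.
Qed.

Lemma Sx_uniq x n k : Sx x n -> Sx x k -> n = k.
Proof.
move=> [n0 [Bn1 Bn2]] [k0 [Bk1 Bk2]].
have [nk|kn|//] := ltngtP n k.
- by exfalso; apply: Bn2; exact: Bn_sub nk _ Bk1.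
- by exfalso; apply: Bk2; exact: Bn_sub kn _ Bn1.
Qed.

Lemma nidx_eq x k : (0 < k)%N -> Bn k x -> ~ Bn k.+1 x -> nidx x = k.
Proof.
move=> k0 h1 h2; have Sk : Sx x k by [].
rewrite /nidx; case: xgetP => [n -> Sn | nS].
- exact: Sx_uniq Sn Sk.
- by exfalso; exact: nS Sk.
Qed.

Lemma nidx_ge x N : (0 < N)%N -> Bn N x -> x <> a -> (N <= nidx x)%N.
Proof.
move=> N0 BN xa; have [k hk] := Bn_out xa.
have : exists2 n, (N <= n)%N & Bn n x /\ ~ Bn n.+1 x.
  have Nk : (N < k)%N.
    rewrite ltnNge; apply/negP => kN; apply: hk; exact: Bn_sub kN _ BN.
  elim: k Nk hk => // k IH; rewrite ltnS leq_eqVlt => /orP[/eqP <- | Nk] hk.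
    by exists N.
  have [Bk|nBk] := pselect (Bn k x); first by exists k; [exact: ltnW|].
  exact: IH.
move=> [n Nn [h1 h2]].
rewrite (nidx_eq (leq_trans N0 Nn) h1 h2) //.
Qed.

Lemma nidx_shell_meas k : (0 < k)%N -> measurable [set x | nidx x = k].
Proof.
move=> k0; rewrite (_ : [set x | nidx x = k] = Bn k `\` Bn k.+1).
  by apply: measurableD; exact: mBn.
apply/seteqP; split => x /=.
- by move=> h; rewrite -h; apply: nidx_spec; rewrite h.
- by move=> [h1 h2]; exact: nidx_eq.
Qed.

Lemma nidx_meas k : measurable [set x | nidx x = k].
Proof.
case: k => [|k]; last exact: nidx_shell_meas.
rewrite (_ : [set x | nidx x = 0%N] = ~` \bigcup_i [set x | nidx x = i.+1]).
  by apply: measurableC; apply: bigcupT_measurable => i; exact: nidx_shell_meas.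
apply/seteqP; split => x /=.
- by move=> h [i _ /=]; rewrite h.
- move=> h; apply/eqP; rewrite eqn0Ngt; apply/negP => h0; apply: h.
  by exists (nidx x).-1 => //=; rewrite prednK.
Qed.

Lemma measurable_nidx (phi : nat -> R) : measurable_fun setT (fun x => phi (nidx x)).
Proof.
move=> _ Y mY; rewrite setTI.
rewrite (_ : _ @^-1` Y = \bigcup_i ([set x | nidx x = i] `&` [set _ | Y (phi i)])).
  apply: bigcupT_measurable => i; apply: measurableI; first exact: nidx_meas.
  have [Yi|nYi] := pselect (Y (phi i)).
  - rewrite (_ : [set x : X | Y (phi i)] = setT) //.
    by apply/seteqP; split => // x.
  - rewrite (_ : [set x : X | Y (phi i)] = set0) //.
    by apply/seteqP; split => // x.
apply/seteqP; split => x /=.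
- by move=> h; exists (nidx x).
- by move=> [i _ /= [-> h]].
Qed.

End Shells.

End P5.
Import P5.

Module P6.
Set Implicit Arguments. Unset Strict Implicit.
Local Open Scope classical_set_scope.
Local Open Scope ring_scope.

Section Small.
Context {d} {X : measurableType d} {R : realType} (mu : {measure set X -> \bar R}).
Context {p : R} (p1 : 1 <= p).
Context (dist : X -> X -> R) (hm : is_metric dist) (a : X) (lam : R) (lam0 : 0 < lam).
Context (mB : forall r, 0 < r -> measurable (mball dist a r)).
Context (ma : measurable [set a]) (mua : mu [set a] = 0%E).

Let p0 : 0 < p. Proof. exact: (lt_le_trans ltr01 p1). Qed.
Local Notation B := (Bn dist a lam).

Lemma mulind_le (f : X -> R) (S : set X) x : `|f x * \1_S x| <= `|f x|.
Proof.
rewrite normrM /indic; case: (x \in S) => /=; by rewrite ?normr1 ?normr0 ?mulr1 ?mulr0.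
Qed.

Lemma fin_mulind (f : X -> R) (S : set X) : measurable S -> fin mu p f ->
  fin mu p (fun x => f x * \1_S x).
Proof.
move=> mS ff; apply: (fin_le p1 _ ff) => //; last exact: mulind_le.
case: ff => mf _; apply: measurable_funM => //; exact: measurable_indic.
Qed.

Lemma D_mono (f : X -> R) m n : fin mu p f -> (m <= n)%N ->
  nr mu p (fun x => f x * \1_(B n) x) <= nr mu p (fun x => f x * \1_(B m) x).
Proof.
move=> ff mn; apply: nr_le => //; last first.
  move=> x; rewrite !normrM /indic.
  have [xn|xn] := boolP (x \in B n).
    have xm : x \in B m by apply/mem_set; apply: (Bn_sub lam0 mn); exact/set_mem.
    by rewrite xm.
  by rewrite /= normr0 mulr0 mulr_ge0.
- exact: fin_mulind (mBn lam0 mB m) ff.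
- exact: (fin_mulind (mBn lam0 mB n) ff).1.
Qed.

Lemma small_ball (f : X -> R) : fin mu p f -> forall eta, 0 < eta ->
  exists N, nr mu p (fun x => f x * \1_(B N) x) < eta.
Proof.
move=> ff eta eta0; apply: contrapT => /forallNP hN.
have [mf fNf] := ff.
pose fn n x := ((`|f x * \1_(B n) x| `^ p)%:E : \bar R).
have key n : ((eta `^ p)%:E <= \int[mu]_x fn n x)%E.
  have := hN n; move/negP; rewrite -leNgt => le.
  have fn' := fin_mulind (mBn lam0 mB n) ff.
  rewrite -lee_fin in le; rewrite (nrE fn') NrE in le.
  have := @gt0_ler_poweR R p (ltW p0) _ _ _ _ le.
  rewrite !in_itv /= leey andbT lee_fin (ltW eta0) /=.
  move=> /(_ isT); rewrite poweR_ge0 leey => /(_ isT).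
  rewrite -poweRrM mulVf ?gt_eqF // poweRe1 //.
  by apply: integral_ge0 => x _; rewrite lee_fin powR_ge0.
have mfn n : measurable_fun setT (fn n).
  apply: mpow; apply: measurable_funM => //; apply: measurable_indic; exact: mBn.
pose g x := ((`|f x| `^ p)%:E : \bar R).
have aea : {ae mu, forall x, x <> a}.
  apply: (negligibleS (A := [set a])); last by apply/negligibleP.
  by move=> x /= /contrapT ->.
have conv : {ae mu, forall x, setT x -> (fn ^~ x) @ \oo --> 0%E}.
  apply: filterS aea => x xa _.
  have [k hk] := Bn_out hm lam xa.
  apply: cvg_near_cst; exists k => // n /= kn.
  rewrite /fn /indic (_ : x \in B n = false) ?mulr0 ?normr0 ?powR0 ?gt_eqF //.
  apply/negbTE/negP => /set_mem hn; apply: hk; exact: (Bn_sub lam0 kn hn).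
have integ : mu.-integrable setT g.
  apply/integrableP; split; first exact: mpow.
  under eq_integral do rewrite gee0_abs ?lee_fin ?powR_ge0 //.
  apply: (@lty_poweRy _ _ p^-1); first by rewrite invr_neq0 // gt_eqF.
  by rewrite -NrE.
have bound : {ae mu, forall x, forall n, setT x -> (`|fn n x| <= g x)%E}.
  apply: aeW => x n _; rewrite gee0_abs ?lee_fin ?powR_ge0 //.
  by apply: ge0_ler_powR; rewrite ?nnegrE //; [exact: ltW | exact: mulind_le].
have [_ _ cv] := @dominated_convergence _ _ _ mu setT measurableT fn (cst 0%E) g
  mfn (measurable_cst _) conv integ bound.
have hk : \forall n \near \oo, ((eta `^ p)%:E <= \int[mu]_x fn n x)%E by exact: nearW.
have := cvge_to_ge cv hk; rewrite integral0 lee_fin.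
by move=> /(_ _) h; move: h; rewrite leNgt powR_gt0.
Qed.

End Small.

End P6.
Import P6.

Module P7.
Set Implicit Arguments. Unset Strict Implicit.
Local Open Scope classical_set_scope.
Local Open Scope ring_scope.

Definition clamp {R : realType} (t : R) := Num.max 0 (Num.min 1 t).

Lemma clamp_lip {R : realType} (s t : R) : `|clamp s - clamp t| <= `|s - t|.
Proof.
have n1 : s - t <= `|s - t| := ler_norm _.
have n2 : t - s <= `|s - t| by rewrite distrC ler_norm.
rewrite ler_norml; rewrite /clamp /Num.max /Num.min.
repeat case: ifPn; rewrite ?ltNge ?negbK => *; apply/andP; split; lra.
Qed.

Lemma clamp01 {R : realType} (t : R) : 0 <= clamp t <= 1.
Proof.
rewrite /clamp /Num.max /Num.min; repeat case: ifPn; rewrite ?ltNge ?negbK => *;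
  apply/andP; split; lra.
Qed.

Lemma clamp_gt0 {R : realType} (t : R) : clamp t != 0 -> 0 < t.
Proof.
rewrite /clamp /Num.max /Num.min; repeat case: ifPn; rewrite ?ltNge ?negbK => *;
  try lra; move: H; rewrite ?eqxx // => /eqP *; lra.
Qed.

Lemma clamp1 {R : realType} (t : R) : 1 <= t -> clamp t = 1.
Proof.
rewrite /clamp /Num.max /Num.min; repeat case: ifPn; rewrite ?ltNge ?negbK => *;
  lra.
Qed.

Lemma frac_bound {R : realType} (D D' e e' s K : R) : 0 < e -> 0 < e' ->
  `|D - D'| <= s -> 0 <= D' <= K ->
  `|(2 - 4 * D / e) - (2 - 4 * D' / e')| <= 4 * (s / e + K * `|e - e'| / (e * e')).
Proof.
move=> e0 e'0 hs /andP[D'0 D'K].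
have -> : (2 - 4 * D / e) - (2 - 4 * D' / e') =
    - 4 * ((D - D') / e + D' * (e' - e) / (e * e')).
  by field; apply/andP; split; rewrite gt_eqF.
rewrite normrM normrN (ger0_norm (_ : 0 <= 4 :> R)) //.
rewrite ler_wpM2l //; apply: le_trans (ler_normD _ _) _.
apply: lerD.
  by rewrite normrM (ger0_norm (_ : 0 <= e^-1)) ?invr_ge0 ?(ltW e0) // ler_wpM2r // invr_ge0 ltW.
rewrite -!mulrA normrM ger0_norm //; apply: ler_pM => //.
rewrite normrM (ger0_norm (_ : 0 <= (e * e')^-1)); last by rewrite invr_ge0 mulr_ge0 // ltW.
by rewrite distrC.
Qed.

Section Core.
Context {d} {X : measurableType d} {R : realType} (mu : {measure set X -> \bar R}).
Context {p : R} (p1 : (1 <= p%:E)%E).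
Context (dist : X -> X -> R) (hm : is_metric dist) (a : X) (lam : R) (lam0 : 0 < lam).
Context (mB : forall r, 0 < r -> measurable (mball dist a r)).
Context (finB : (mu (mball dist a lam) < +oo)%E).
Context (ma : measurable [set a]) (mua : mu [set a] = 0%E).
Local Notation Lp := (LspaceType mu p1).
Local Notation dd := (@Lpdist d X R mu p p1).
Context (g : Lp -> Lp) (eps : Lp -> R) (eps0 : forall z, 0 < eps z).

Let p1' : 1 <= p := p1r p1.
Local Notation B := (Bn dist a lam).
Local Notation nidx := (nidx dist a lam).
Definition GG (z : Lp) : X -> R := (g z : X -> R).
Definition Dn n z := nr mu p (fun x => GG z x * \1_(B n) x).
Definition n1 := nr mu p (\1_(B 0)).
Definition k0 := (4 * (n1 + 1))^-1.
Definition cc z := k0 * eps z.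
Definition beta n z := if n is 0%N then 0 else clamp (2 - 4 * Dn n z / eps z).
Definition Psi z x := beta (nidx x) z.
Definition hh z x := GG z x + Psi z x * cc z - Psi z x * GG z x.

Lemma B0E : B 0 = mball dist a lam.
Proof. by rewrite /Bn /rad divr1. Qed.

Lemma fin1 : fin mu p (\1_(B 0)).
Proof. by apply: (fin_indic p1'); [exact: (mBn lam0 mB 0) | rewrite B0E]. Qed.

Lemma n1_ge0 : 0 <= n1. Proof. exact: nr_ge0. Qed.

Lemma k0_gt0 : 0 < k0.
Proof. by rewrite /k0 invr_gt0 mulr_gt0 // ltr_pwDr // n1_ge0. Qed.

Lemma k0n1 : k0 * n1 <= 4^-1.
Proof.
rewrite /k0 invfM mulrAC ler_pdivrMr; last by rewrite ltr_pwDr // n1_ge0.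
by rewrite mulrDr mulr1 lerDl invr_ge0.
Qed.

Lemma finG z : fin mu p (GG z). Proof. exact: finLp. Qed.
Lemma mG z : measurable_fun setT (GG z). Proof. exact: mLp. Qed.

Lemma Psi01 z x : 0 <= Psi z x <= 1.
Proof. rewrite /Psi /beta; case: (nidx x) => [|n]; [by rewrite lexx ler01|exact: clamp01]. Qed.

Lemma Psi_supp z x : Psi z x != 0 ->
  [/\ (0 < nidx x)%N, B (nidx x) x & Dn (nidx x) z < eps z / 2].
Proof.
rewrite /Psi /beta; case E : (nidx x) => [|n]; first by rewrite eqxx.
move=> /clamp_gt0 h; split => //.
  by have [] := @nidx_spec _ _ _ dist a lam x; rewrite E.
have e0 := eps0 z.
move: h; rewrite subr_gt0 ltr_pdivrMr // => h.
rewrite ltr_pdivlMr //; lra.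
Qed.

Lemma Psi_B0 z x : `|Psi z x| <= \1_(B 0) x.
Proof.
have [->|nz] := eqVneq (Psi z x) 0; first by rewrite normr0 /indic; case: (_ \in _).
have [_ hB _] := Psi_supp nz.
rewrite /indic (_ : x \in B 0) ?ger0_norm //; first by case/andP: (Psi01 z x).
  by case/andP: (Psi01 z x).
by apply/mem_set; exact: (Bn_sub lam0 (leq0n _) hB).
Qed.

Lemma mPsi z : measurable_fun setT (Psi z).
Proof. exact: (measurable_nidx lam0 mB (fun n => beta n z)). Qed.

Lemma fin_PsiG z : fin mu p (fun x => Psi z x * GG z x).
Proof.
apply: (fin_le p1' _ (finG z)); first exact: measurable_funM (mPsi z) (mG z).
move=> x; rewrite normrM ler_piMl //; have /andP[h0 h1] := Psi01 z x.
by rewrite ger0_norm.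
Qed.

Lemma fin_Psic z : fin mu p (fun x => Psi z x * cc z).
Proof.
apply: (fin_le p1' _ (fin_scale p1' (cc z) fin1)).
  by apply: measurable_funM => //; exact: mPsi.
move=> x; rewrite !normrM mulrC ler_wpM2l //.
by apply: le_trans (Psi_B0 z x) _; rewrite ler_norm.
Qed.

Lemma fin_h z : fin mu p (hh z).
Proof.
apply: (fin_sub p1'); last exact: fin_PsiG.
by apply: (fin_add p1') => //; [exact: finG | exact: fin_Psic].
Qed.

Definition FF z : Lp := mkLp p1 (hh z) (fin_h z).1 (fin_h z).2.

Lemma FF_ae z : {ae mu, forall x, (FF z : X -> R) x = hh z x}.
Proof. exact: mkLp_ae. Qed.

Lemma dd_gF z : dd (g z) (FF z) < eps z.
Proof.
rewrite ddE.
have -> : nr mu p (fun x => (g z : X -> R) x - (FF z : X -> R) x) =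
    nr mu p (fun x => Psi z x * GG z x - Psi z x * cc z).
  apply: nr_ae.
  - by apply: measurable_funB; [exact: mG | exact: mLp].
  - by apply: measurable_funB; [exact: (fin_PsiG z).1 | exact: (fin_Psic z).1].
  apply: filterS (FF_ae z) => x ->; rewrite /hh /GG; lra.
apply: le_lt_trans (nr_sub_le p1' (fin_PsiG z) (fin_Psic z)) _.
have hc : nr mu p (fun x => Psi z x * cc z) <= eps z / 4.
  apply: le_trans (nr_le p1' (fin_Psic z).1 (fin_scale p1' (cc z) fin1) _) _.
    move=> x; rewrite !normrM mulrC ler_wpM2l //.
    by apply: le_trans (Psi_B0 z x) _; rewrite ler_norm.
  rewrite (nr_scale p1' _ fin1) /cc ger0_norm; last by rewrite mulr_ge0 // ?ltW // k0_gt0.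
  have h := k0n1; have e0 := eps0 z; rewrite -/n1; nra.
pose P := fun n => (0 < n)%N && (Dn n z < eps z / 2).
have exP : exists n, P n.
  have [N hN] := small_ball p1' hm lam0 mB ma mua (finG z) (ltac:(by rewrite divr_gt0)
     : 0 < eps z / 2).
  exists N.+1; rewrite /P ltn0Sn /=; apply: le_lt_trans hN.
  exact: (D_mono p1' lam0 mB (finG z) (leqnSn N)).
have [M PM Mmin] := ex_minnP exP.
have hG : nr mu p (fun x => Psi z x * GG z x) < eps z / 2.
  apply: le_lt_trans (_ : Dn M z < eps z / 2); last by case/andP: PM.
  rewrite /Dn; apply: (nr_le p1'); first exact: (fin_PsiG z).1.
    exact: (fin_mulind p1' (mBn lam0 mB M) (finG z)).
  move=> x; have [->|nz] := eqVneq (Psi z x) 0; first by rewrite mul0r normr0.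
  have [n0 hB hD] := Psi_supp nz.
  have Mle : (M <= nidx x)%N by apply: Mmin; rewrite /P n0 hD.
  rewrite /indic (_ : x \in B M); last by apply/mem_set; exact: (Bn_sub lam0 Mle hB).
  rewrite mulr1 normrM ler_piMl //; have /andP[h0 h1] := Psi01 z x.
  by rewrite ger0_norm.
have e0 := eps0 z; lra.
Qed.

Lemma Dn_ge0 n z : 0 <= Dn n z. Proof. exact: nr_ge0. Qed.

Lemma hh_c z : exists N, [/\ (0 < N)%N & forall x, B N x -> x <> a -> hh z x = cc z].
Proof.
have e4 : 0 < eps z / 4 by rewrite divr_gt0 // eps0.
have [N hN] := small_ball p1' hm lam0 mB ma mua (finG z) e4.
exists N.+1; split => // x BN xa.
have nge := nidx_ge hm lam0 (ltn0Sn N) BN xa.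
have hD : Dn (nidx x) z < eps z / 4.
  apply: le_lt_trans hN.
  exact: (D_mono p1' lam0 mB (finG z) (leq_trans (leqnSn N) nge)).
have P1 : Psi z x = 1.
  rewrite /Psi /beta; case E : (nidx x) => [|n]; first by rewrite E in nge.
  rewrite -E; apply: clamp1; have e0 := eps0 z.
  have : 4 * Dn (nidx x) z / eps z < 1.
    by rewrite ltr_pdivrMr // mul1r; move: hD; rewrite ltr_pdivlMr //; lra.
  lra.
by rewrite /hh P1 !mul1r addrC addKr.
Qed.

Lemma cc_neq0 z : cc z != 0.
Proof. by rewrite /cc mulf_neq0 // gt_eqF // ?k0_gt0 ?eps0. Qed.

Lemma FF_notA z (xi : R) : 0 < xi ->
  (forall r, 0 < r -> (0 < mu (mball dist a r))%E) ->
  ~ {ae mu, forall x, mball dist a xi x -> (FF z : X -> R) x = 0}.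
Proof.
move=> xi0 muB hA.
have [N [N0 hN]] := hh_c z.
pose r := Num.min xi (rad lam N).
have r0 : 0 < r by rewrite lt_min xi0 rad_gt0.
have hb : {ae mu, forall x, (mball dist a xi x -> (FF z : X -> R) x = 0)
    /\ (FF z : X -> R) x = hh z x}.
  by apply: filterS2 hA (FF_ae z) => x h1 h2.
have neg : mu.-negligible (mball dist a r).
  apply: (negligibleS (A := (~` [set x | (mball dist a xi x -> (FF z : X -> R) x = 0)
      /\ (FF z : X -> R) x = hh z x]) `|` [set a])).
    move=> x xr; have [->|xa] := pselect (x = a); first by right.
    left => /= [[h1 h2]].
    have xxi : mball dist a xi x by apply: lt_le_trans xr _; rewrite ge_min lexx.
    have xN : B N x by apply: lt_le_trans xr _; rewrite ge_min lexx orbT.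
    have := h1 xxi; rewrite h2 (hN x xN xa) => /eqP; apply/negP; exact: cc_neq0.
  apply: negligibleU; first exact: hb.
  by apply/negligibleP.
move/negligibleP : neg => /(_ (mB r0)) h.
by have := muB r r0; rewrite h ltxx.
Qed.

Definition kap z z' := 4 * (dd (g z) (g z') / eps z +
  nr mu p (GG z') * `|eps z - eps z'| / (eps z * eps z')).

Lemma kap_ge0 z z' : 0 <= kap z z'.
Proof.
have e0 := eps0 z; have e0' := eps0 z'.
rewrite /kap mulr_ge0 // addr_ge0 // ?divr_ge0 ?mulr_ge0 ?(ltW e0) ?(ltW e0') //;
  [exact: dd_ge0 | exact: nr_ge0].
Qed.

Lemma mGB (z : Lp) (S : set X) : measurable S -> measurable_fun setT (fun x => GG z x * \1_S x).
Proof. move=> mS; apply: measurable_funM; [exact: mG | exact: measurable_indic]. Qed.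

Lemma Dn_le n z : Dn n z <= nr mu p (GG z).
Proof.
apply: (nr_le p1' (mGB z (mBn lam0 mB n)) (finG z)) => x.
exact: mulind_le.
Qed.

Lemma Dn_lip n z z' : `|Dn n z - Dn n z'| <= dd (g z) (g z').
Proof.
have key u v : Dn n u <= dd (g u) (g v) + Dn n v.
  rewrite /Dn ddE.
  have -> : (fun x => GG u x * \1_(B n) x) =
      (fun x => (GG u x - GG v x) * \1_(B n) x + GG v x * \1_(B n) x).
    by apply: funext => x; ring.
  have f1 := fin_mulind p1' (mBn lam0 mB n) (fin_sub p1' (finG u) (finG v)).
  have f2 := fin_mulind p1' (mBn lam0 mB n) (finG v).
  apply: le_trans (nr_add p1' f1 f2) _; apply: lerD => //.
  apply: (nr_le p1' f1.1 (fin_sub p1' (finG u) (finG v))) => x.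
  exact: (mulind_le (fun x => GG u x - GG v x)).
have h1 := key z z'; have h2 := key z' z; rewrite dd_sym in h2.
rewrite ler_norml; apply/andP; split; lra.
Qed.

Lemma Psi_lip z z' x : `|Psi z x - Psi z' x| <= kap z z' * \1_(B 0) x.
Proof.
rewrite /Psi /beta; case E : (nidx x) => [|n].
  by rewrite subrr normr0 mulr_ge0 ?kap_ge0 // /indic; case: (_ \in _).
have [hB _] : B (nidx x) x /\ ~ B (nidx x).+1 x by apply: nidx_spec; rewrite E.
rewrite E in hB.
rewrite /indic (_ : x \in B 0) ?mulr1; last first.
  by apply/mem_set; exact: (Bn_sub lam0 (leq0n _) hB).
apply: le_trans (clamp_lip _ _) _.
apply: frac_bound; [exact: eps0 | exact: eps0 | exact: Dn_lip | ].
by rewrite Dn_ge0 Dn_le.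
Qed.

Lemma hh_lip z z' x : `|hh z x - hh z' x| <=
  `|GG z x - GG z' x| + kap z z' * (`|cc z| * \1_(B 0) x)
  + kap z z' * (`|GG z x| * \1_(B 0) x) + (k0 * `|eps z - eps z'|) * \1_(B 0) x.
Proof.
have -> : hh z x - hh z' x = (GG z x - GG z' x) * (1 - Psi z' x) +
    (Psi z x - Psi z' x) * (cc z - GG z x) + Psi z' x * (cc z - cc z').
  by rewrite /hh; ring.
have ind0 : 0 <= \1_(B 0) x :> R by rewrite /indic; case: (_ \in _).
rewrite -(addrA `|GG z x - GG z' x|).
apply: le_trans (ler_normD _ _) _; apply: lerD; last first.
  rewrite normrM mulrC; apply: ler_pM; [exact: normr_ge0 | exact: normr_ge0 | | exact: Psi_B0].
  by rewrite /cc -mulrBr normrM (ger0_norm (ltW k0_gt0)).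
apply: le_trans (ler_normD _ _) _; apply: lerD.
  rewrite normrM ler_piMr //; have /andP[h0 h1] := Psi01 z' x.
  by rewrite ger0_norm; lra.
rewrite normrM.
apply: le_trans (_ : kap z z' * \1_(B 0) x * (`|cc z| + `|GG z x|) <= _).
  apply: ler_pM; [exact: normr_ge0 | exact: normr_ge0 | exact: Psi_lip | exact: ler_normB].
by rewrite le_eqVlt; apply/orP; left; apply/eqP; ring.
Qed.

Lemma dd_FF z z' : dd (FF z) (FF z') <= dd (g z) (g z') + kap z z' * (`|cc z| * n1)
  + kap z z' * nr mu p (GG z) + k0 * `|eps z - eps z'| * n1.
Proof.
set u := `|eps z - eps z'|.
have fP1 : fin mu p (fun x => `|GG z x - GG z' x|) :=
  fin_abs p1' (fin_sub p1' (finG z) (finG z')).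
have fP2 : fin mu p (fun x => kap z z' * (`|cc z| * \1_(B 0) x)) :=
  fin_scale p1' _ (fin_scale p1' _ fin1).
have fP3 : fin mu p (fun x => kap z z' * (`|GG z x| * \1_(B 0) x)) :=
  fin_scale p1' _ (fin_mulind p1' (mBn lam0 mB 0) (fin_abs p1' (finG z))).
have fP4 : fin mu p (fun x => (k0 * u) * \1_(B 0) x) := fin_scale p1' _ fin1.
have f12 := fin_add p1' fP1 fP2.
have f123 := fin_add p1' f12 fP3.
have f1234 := fin_add p1' f123 fP4.
rewrite ddE.
have mhh : measurable_fun setT (fun x => hh z x - hh z' x).
  by apply: measurable_funB; [exact: (fin_h z).1 | exact: (fin_h z').1].
have -> : nr mu p (fun x => (FF z : X -> R) x - (FF z' : X -> R) x) =
    nr mu p (fun x => hh z x - hh z' x).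
  apply: nr_ae => //.
  - by apply: measurable_funB; exact: mLp.
  by apply: filterS2 (FF_ae z) (FF_ae z') => x -> ->.
apply: le_trans (nr_le p1' mhh f1234 _) _.
  by move=> x; apply: le_trans (hh_lip z z' x) _; exact: ler_norm.
apply: le_trans (nr_add p1' f123 fP4) _.
have u0 : 0 <= k0 * u by apply: mulr_ge0; [exact: (ltW k0_gt0) | exact: normr_ge0].
rewrite (nr_scale p1' _ fin1) -/n1 (ger0_norm u0).
apply: lerD => //.
apply: le_trans (nr_add p1' f12 fP3) _; apply: lerD.
  apply: le_trans (nr_add p1' fP1 fP2) _; apply: lerD.
    by rewrite (nr_abs p1' (fin_sub p1' (finG z) (finG z'))) ddE.
  rewrite (nr_scale p1' _ (fin_scale p1' _ fin1)) (nr_scale p1' _ fin1) -/n1.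
  by rewrite ger0_norm ?kap_ge0 // normr_id.
rewrite (nr_scale p1' _ (fin_mulind p1' (mBn lam0 mB 0) (fin_abs p1' (finG z)))).
rewrite ger0_norm ?kap_ge0 // ler_wpM2l ?kap_ge0 //.
rewrite -(nr_abs p1' (finG z)).
apply: (nr_le p1' (fin_mulind p1' (mBn lam0 mB 0) (fin_abs p1' (finG z))).1 (fin_abs p1' (finG z))).
by move=> x; exact: (mulind_le (fun x => `|GG z x|)).
Qed.

Lemma nrG_lip z z' : nr mu p (GG z') <= nr mu p (GG z) + dd (g z) (g z').
Proof.
have f1 := fin_sub p1' (finG z') (finG z).
have -> : GG z' = (fun x => (GG z' x - GG z x) + GG z x).
  by apply: funext => x; rewrite subrK.
apply: le_trans (nr_add p1' f1 (finG z)) _.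
by rewrite addrC lerD2l dd_sym ddE.
Qed.

Lemma FF_cont : mcontinuous dd g ->
  (forall z e, 0 < e -> exists2 del, 0 < del &
     forall z', dd z z' < del -> `|eps z - eps z'| < e) ->
  mcontinuous dd FF.
Proof.
move=> gc ec z eta eta0.
have e0 := eps0 z.
set e := eps z.
set K := nr mu p (GG z) + 1.
have K0 : 0 <= K by rewrite addr_ge0 // nr_ge0.
set C1 := 4 * (e^-1 + K * (2 / (e * e))).
have C10 : 0 <= C1.
  by rewrite mulr_ge0 // addr_ge0 ?invr_ge0 ?(ltW e0) // mulr_ge0 // divr_ge0 // mulr_ge0 // ltW.
set Cc := `|cc z| * n1 + nr mu p (GG z).
have Cc0 : 0 <= Cc by rewrite addr_ge0 ?mulr_ge0 ?n1_ge0 ?nr_ge0.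
set C := 1 + C1 * Cc + k0 * n1.
have C0 : 0 <= C.
  have := k0_gt0; have := n1_ge0; rewrite /C; nra.
set t := Num.min (Num.min 1 (e / 2)) (eta / (C + 1)).
have C1pos : 0 < C + 1 by rewrite ltr_wpDl.
have t0 : 0 < t by rewrite !lt_min ltr01 divr_gt0 //= divr_gt0.
have t1 : t <= 1 by rewrite !ge_min lexx.
have te : t <= e / 2 by rewrite !ge_min lexx orbT.
have teta : t * (C + 1) <= eta.
  by rewrite -ler_pdivlMr // ge_min lexx orbT.
have [d1 d10 hd1] := gc z t t0.
have [d2 d20 hd2] := ec z t t0.
exists (Num.min d1 d2) => [|z' hz']; first by rewrite lt_min d10 d20.
have hs : dd (g z) (g z') < t by apply: hd1; apply: lt_le_trans hz' _; rewrite ge_min lexx.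
have hu : `|e - eps z'| < t by apply: hd2; apply: lt_le_trans hz' _; rewrite ge_min lexx orbT.
set sg := dd (g z) (g z') in hs *.
set u := `|e - eps z'| in hu *.
have sg0 : 0 <= sg by exact: dd_ge0.
have u0 : 0 <= u by exact: normr_ge0.
have e'0 := eps0 z'.
have e'e : e / 2 <= eps z'.
  have : e - eps z' <= u by exact: ler_norm.
  lra.
have nG : nr mu p (GG z') <= K.
  apply: le_trans (nrG_lip z z') _; rewrite /K lerD2l -/sg; lra.
have nG0 : 0 <= nr mu p (GG z') by exact: nr_ge0.
have hw : u / (e * eps z') <= t * (2 / (e * e)).
  rewrite ler_pdivrMr ?mulr_gt0 //.
  have : t * (2 / (e * e)) * (e * eps z') = t * (2 * eps z' / e).
    by field; rewrite gt_eqF.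
  move=> ->.
  have h2 : 1 <= 2 * eps z' / e by rewrite ler_pdivlMr // mul1r; lra.
  apply: le_trans (ltW hu) _; rewrite -[leLHS]mulr1; apply: ler_wpM2l => //; exact: ltW.
have hk : kap z z' <= t * C1.
  rewrite /kap -/e /C1.
  have -> : t * (4 * (e^-1 + K * (2 / (e * e)))) = 4 * (t / e + K * (t * (2 / (e * e)))).
    by ring.
  apply: ler_wpM2l => //; apply: lerD.
    by apply: ler_wpM2r; [rewrite invr_ge0 ltW | exact: ltW].
  rewrite -mulrA; apply: ler_pM => //.
  by rewrite divr_ge0 // mulr_ge0 // ltW.
apply: le_lt_trans (dd_FF z z') _.
rewrite -/e -/u -/sg.
have -> : sg + kap z z' * (`|cc z| * n1) + kap z z' * nr mu p (GG z) + k0 * u * n1 =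
    sg + kap z z' * Cc + (k0 * n1) * u by rewrite /Cc; ring.
apply: (@le_lt_trans _ _ (t * C)).
  rewrite /C; have -> : t * (1 + C1 * Cc + k0 * n1) = t + (t * C1) * Cc + (k0 * n1) * t by ring.
  apply: lerD; first apply: lerD.
  - exact: ltW.
  - by apply: ler_wpM2r.
  - by apply: ler_wpM2l; [rewrite mulr_ge0 ?n1_ge0 // ltW // k0_gt0 | exact: ltW].
apply: lt_le_trans teta; rewrite ltr_pM2l //; lra.
Qed.

End Core.

End P7.
Import P7.

Module P8.
Local Open Scope classical_set_scope.
Local Open Scope ring_scope.

Lemma min_lip {R : realType} (x y x' y' : R) :
  `|Num.min x y - Num.min x' y'| <= `|x - x'| + `|y - y'|.
Proof.
have n1 : x - x' <= `|x - x'| := ler_norm _.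
have n2 : x' - x <= `|x - x'| by rewrite distrC ler_norm.
have n3 : y - y' <= `|y - y'| := ler_norm _.
have n4 : y' - y <= `|y - y'| by rewrite distrC ler_norm.
have n5 : 0 <= `|x - x'| := normr_ge0 _.
have n6 : 0 <= `|y - y'| := normr_ge0 _.
rewrite ler_norml /Num.min; repeat case: ifPn; rewrite ?ltNge ?negbK => *;
  apply/andP; split; lra.
Qed.


End P8.
Import P8.

Unset Implicit Arguments.
Local Open Scope classical_set_scope.
Local Open Scope ring_scope.

Theorem mainTheorem5 (dT : measure_display) (X : measurableType dT) (R : realType)
  (dist : X -> X -> R) (mu : {measure set X -> \bar R})
  (p : R) (p1 : (1 <= p%:E)%E)
  (a : X)
  (A B : set (LspaceType mu p1)) (xi : LspaceType mu p1 -> R) :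
  is_metric dist ->
  a \in X0 mu ->
  (forall lam : R, 0 < lam ->
     measurable (mball dist a lam) /\ (0 < mu (mball dist a lam))%E) ->
  (exists2 lam' : R, 0 < lam' & (mu (mball dist a lam') < +oo)%E) ->
  (forall f, A f -> 0 < xi f) ->
  (forall f, A f ->
     {ae mu, forall x, mball dist a (xi f) x -> (f : X -> R) x = 0}) ->
  Zset (@Lpdist _ _ _ mu p p1) B ->
  mclosed (@Lpdist _ _ _ mu p p1) (A `|` B) ->
  Zset (@Lpdist _ _ _ mu p p1) (A `|` B).
Proof.
move=> hm haX hball [lam lam0 finB] xi0 hA [Bcl BZ] ABcl.
split => // UU [UUo UUc].
move: haX; rewrite inE => -[ma mua].
have mB : forall r, 0 < r -> measurable (mball dist a r) by move=> r /hball [].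
have muB : forall r, 0 < r -> (0 < mu (mball dist a r))%E by move=> r /hball [].
set dd := @Lpdist _ _ _ mu p p1.
have d_ge0 : forall x y, 0 <= dd x y by move=> *; exact: dd_ge0.
have d_sym : forall x y, dd x y = dd y x by move=> *; exact: dd_sym.
have d_tri : forall x y z, dd x z <= dd x y + dd y z by move=> *; exact: dd_tri.
have d_refl : forall x, dd x x = 0 by move=> *; exact: dd_refl.
have p1' : 1 <= p := p1r p1.
have f0 : fin mu p (fun _ : X => 0 : R).
  split; first exact: measurable_cst.
  rewrite /Nr (_ : (EFin \o fun=> 0) = cst 0%E) ?Lnorm0 //.
  by rewrite gt_eqF // lte_fin (lt_le_trans ltr01 p1').
pose z0 : LspaceType mu p1 := mkLp p1 _ f0.1 f0.2.
have UUn0 : exists U, UU U by have [U ? _] := UUc z0; exists U.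
pose rh := rho dd UU.
have rh_gt0 z : 0 < rh z.
  have [U UUU Uz] := UUc z; exact: (rho_gt0 d_ge0 UUn0 UUU (UUo U UUU) Uz).
pose VV := [set V | exists w, V = [set y | dd w y < rh w / 4]].
have VVc : open_cover dd VV.
  split.
    move=> V [w ->] y /= hy; exists (rh w / 4 - dd w y); first by rewrite subr_gt0.
    move=> y' hy'; have := d_tri w y y'; lra.
  move=> x; exists [set y | dd x y < rh x / 4]; first by exists x.
  by rewrite /= d_refl divr_gt0.
have [g [gc gclose gim]] := BZ VV VVc.
have gB z : ~ B (g z).
  move=> hz; have : (g @` setT `&` B) (g z) by split => //; exists z.
  by rewrite gim.
have UB : exists U, [set ~` B] U by exists (~` B).
pose rB := rho dd [set ~` B].
have rB_gt0 z : 0 < rB (g z).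
  by apply: (rho_gt0 d_ge0 UB (erefl (~` B)) Bcl); exact: gB.
pose eps z := Num.min (rh z) (rB (g z)) / 8.
have eps0 z : 0 < eps z by rewrite divr_gt0 // lt_min rh_gt0 rB_gt0.
have rlip (UU' : set (set _)) (h : exists U, UU' U) z z' :
    `|rho dd UU' z - rho dd UU' z'| <= dd z z'.
  have h1 := rho_lip d_ge0 d_tri h z z'.
  have h2 := rho_lip d_ge0 d_tri h z' z.
  rewrite d_sym in h2; rewrite ler_norml; apply/andP; split; lra.
have ec : forall z e, 0 < e -> exists2 del, 0 < del &
    forall z', dd z z' < del -> `|eps z - eps z'| < e.
  move=> z e e0; have [d1 d10 hd1] := gc z e e0.
  exists (Num.min d1 e); first by rewrite lt_min d10 e0.
  move=> z' hz'.
  have h1 : dd z z' < e by apply: lt_le_trans hz' _; rewrite ge_min lexx orbT.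
  have h2 : dd (g z) (g z') < e by apply: hd1; apply: lt_le_trans hz' _; rewrite ge_min lexx.
  rewrite /eps -mulrBl normrM (ger0_norm (_ : 0 <= 8^-1 :> R)) //.
  apply: le_lt_trans (ler_wpM2r _ (min_lip _ _ _ _)) _ => //.
  have := rlip _ UUn0 z z'; have := rlip _ UB (g z) (g z').
  rewrite -/rh -/rB => r1 r2; lra.
pose F := FF lam0 mB finB g eps0.
exists F; split.
- exact: FF_cont.
- move=> z; have [V [w ->] [/= hgz hz]] := gclose z.
  have hw := rh_gt0 w.
  have hw2 : rh w / 2 < rh w by lra.
  have [U UUU hU] := rho_ball d_ge0 UUn0 hw2.
  exists U => //; split; apply: hU.
  + have hF : dd (g z) (F z) < eps z by exact: dd_gF.
    have he : eps z <= rh z / 8.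
      by rewrite /eps ler_wpM2r // ge_min lexx.
    have hr : rh z <= rh w + dd w z.
      have := rho_lip d_ge0 d_tri UUn0 z w; rewrite d_sym -/rh; lra.
    have := d_tri w (g z) (F z); lra.
  + lra.
- apply/seteqP; split => // _ [[z _ <-] hAB].
  have hF : dd (g z) (F z) < eps z by exact: dd_gF.
  case: hAB => [hAz | hBz].
  + exact: (FF_notA hm ma mua (xi0 _ hAz) muB (hA _ hAz)).
  + have he : eps z <= rB (g z) / 8.
      by rewrite /eps ler_wpM2r // ge_min lexx orbT.
    have hb8 : rB (g z) / 8 < rB (g z) by have := rB_gt0 z; lra.
    have [U -> hU] := rho_ball d_ge0 UB hb8.
    by apply: hU hBz; lra.
Qed.
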